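(* Let $H$ be a graph with tree-width $k-1$ and let $(\{X_i\mid i\in I\},T=(I,F))$ be a tree-decomposition of $H$ of width $k-1$. For an integer $r\ge0$ and $i\in I$ let $X_i^{(r)}=D_r(X_i,H):=\bigcup_{x\in X_i}D_r(x,H)$. Then for every integer $r\ge0$, $(\{X_i^{(r)}\mid i\in I\},T=(I,F))$ is a tree-decomposition of $H$ with $k$-breadth at most $r$.
   Context: Graphs are finite, connected, unweighted, undirected and simple; $d_H$ is the shortest-path distance and $D_r(x,H)=\{u: d_H(u,x)\le r\}$. A tree-decomposition of $H=(V,E)$ is a pair $(\{X_i\mid i\in I\},T=(I,F))$ with $T$ a tree and bags $X_i\subseteq V$ such that (1) $\bigcup_i X_i=V$; (2) every edge lies in some bag; (3) for each $v\in V$ the nodes containing $v$ induce a connected subtree of $T$. Its width is $\max_i|X_i|-1$, and the tree-width of $H$ is the minimum width over all its tree-decompositions. The $k$-breadth of a tree-decomposition is the minimum integer $r$ such that every bag is contained in a union of at most $k$ disks of $H$ of radius $r$. *)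

(* Defs.v *)
From mathcomp Require Import all_boot.
Set Implicit Arguments. Unset Strict Implicit. Unset Printing Implicit Defensive.

Definition simple_graph (V : finType) (e : rel V) : Prop :=
  symmetric e /\ irreflexive e.

Definition connected_graph (V : finType) (e : rel V) : Prop :=
  0 < #|V| /\ forall x y : V, connect e x y.

(* Shortest-path distance at most r: there is a walk x = v0, v1, ..., vn = u
   with n <= r (a walk of length n <= r exists iff d(x,u) <= r). *)
Definition dist_le (V : finType) (e : rel V) (r : nat) (x u : V) : bool :=
  [exists n : 'I_r.+1, [exists p : n.-tuple V, path e x p && (last x p == u)]].

Definition disk (V : finType) (e : rel V) (r : nat) (x : V) : {set V} :=
  [set u | dist_le e r x u].

Definition disk_set (V : finType) (e : rel V) (r : nat) (S : {set V}) : {set V} :=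
  \bigcup_(x in S) disk e r x.

Definition is_tree (I : finType) (F : rel I) : Prop :=
  simple_graph F /\ connected_graph F /\
  forall s : seq I, uniq s -> 3 <= size s -> ~~ cycle F s.

Definition is_tree_decomposition (V : finType) (e : rel V)
    (I : finType) (F : rel I) (X : I -> {set V}) : Prop :=
  is_tree F /\
  (forall v : V, exists i : I, v \in X i) /\
  (forall u v : V, e u v -> exists i : I, (u \in X i) && (v \in X i)) /\
  (forall v : V, forall i j : I, v \in X i -> v \in X j ->
     connect [rel a b | F a b && (v \in X a) && (v \in X b)] i j).

Definition width (V : finType) (I : finType) (X : I -> {set V}) : nat :=
  (\max_(i : I) #|X i|).-1.

Definition has_treewidth (V : finType) (e : rel V) (w : nat) : Prop :=
  (exists (I : finType) (F : rel I) (X : I -> {set V}),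
      is_tree_decomposition e F X /\ width X = w) /\
  (forall (I : finType) (F : rel I) (X : I -> {set V}),
      is_tree_decomposition e F X -> w <= width X).

Definition bags_covered (V : finType) (e : rel V) (I : finType)
    (X : I -> {set V}) (k r : nat) : Prop :=
  forall i : I, exists C : {set V},
    #|C| <= k /\ X i \subset \bigcup_(c in C) disk e r c.

(* The k-breadth (minimum such r) is at most r. *)
Definition kbreadth_le (V : finType) (e : rel V) (I : finType)
    (X : I -> {set V}) (k r : nat) : Prop :=
  exists r', r' <= r /\ bags_covered e X k r'.

(* Main.v *)
Require Import Defs.
From mathcomp Require Import all_boot.

Lemma dist_leP (V : finType) (e : rel V) r x u :
  dist_le e r x u <-> exists p : seq V, size p <= r /\ path e x p /\ last x p = u.
Proof.
split.
- case/existsP=> n /existsP [p /andP [Hp /eqP Hl]].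
  exists (val p); rewrite size_tuple; split; first by rewrite -ltnS ltn_ord.
  by [].
- case=> p [Hs [Hp Hl]]. apply/existsP.
  have Hs' : size p < r.+1 by [].
  exists (Ordinal Hs'). apply/existsP. exists (in_tuple p).
  by rewrite /= Hp Hl eqxx.
Qed.

Section Conn.
Variables (V : finType) (e : rel V) (I : finType) (F : rel I) (X : I -> {set V}).
Variables (r : nat) (v : V).
Hypothesis Hedge : forall u w : V, e u w -> exists i : I, (u \in X i) && (w \in X i).
Hypothesis Hconn : forall w : V, forall i j : I, w \in X i -> w \in X j ->
     connect [rel a b | F a b && (w \in X a) && (w \in X b)] i j.

Definition Q := [rel a b | F a b && (v \in disk_set e r (X a)) && (v \in disk_set e r (X b))].

Lemma in_ds x a p : x \in X a -> size p <= r -> path e x p -> last x p = v ->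
  v \in disk_set e r (X a).
Proof.
move=> Hx Hs Hp Hl. apply/bigcupP; exists x => //.
rewrite inE. apply/dist_leP. by exists p.
Qed.

Lemma walk_conn p : forall x a c, size p <= r -> path e x p -> last x p = v ->
  x \in X a -> v \in X c -> connect Q a c.
Proof.
elim: p => [|y p IH] x a c Hs Hp Hl Hxa Hvc.
- rewrite /= in Hl; subst x.
  apply: (connect_sub _ (Hconn _ _ _ Hxa Hvc)) => a' b' /= /andP [/andP [Hf Ha] Hb].
  apply: connect1 => /=. rewrite Hf.
  by rewrite (@in_ds v a' [::]) // (@in_ds v b' [::]).
- move: Hp => /= /andP [Hxy Hp]. rewrite /= in Hl Hs.
  case: (Hedge _ _ Hxy) => b /andP [Hxb Hyb].
  apply: (connect_trans (y:=b)).
  + apply: (connect_sub _ (Hconn _ _ _ Hxa Hxb)) => a' b' /= /andP [/andP [Hf Ha] Hb].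
    apply: connect1 => /=. rewrite Hf.
    have Hp' : path e x (y :: p) by rewrite /= Hxy Hp.
    by rewrite (@in_ds x a' (y :: p)) // (@in_ds x b' (y :: p)).
  + apply: (IH y b c) => //. exact: ltnW.
Qed.
End Conn.

Theorem lemma14 (V : finType) (e : rel V) (k : nat)
    (I : finType) (F : rel I) (X : I -> {set V}) :
  simple_graph e -> connected_graph e -> 0 < k ->
  has_treewidth e k.-1 ->
  is_tree_decomposition e F X -> width X = k.-1 ->
  forall r : nat,
    is_tree_decomposition e F (fun i => disk_set e r (X i)) /\
    kbreadth_le e (fun i => disk_set e r (X i)) k r.
Proof.
move=> _ _ Hk _ [Htree [Hcov [Hedge Hconn]]] Hw r.
have Hsub : forall i, X i \subset disk_set e r (X i).
  move=> i; apply/subsetP => u Hu; apply/bigcupP; exists u => //.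
  rewrite inE; apply/dist_leP; by exists [::].
split; last first.
  exists r; split => // i; exists (X i); split => //.
  have := @leq_bigmax I (fun i => #|X i|) i.
  rewrite /width in Hw. move: Hw Hk.
  case: (\max_(i0 : I) #|X i0|) => [|m] /= -> ; case: k => //= k' _ H.
  by apply: (leq_trans H).
split => //; split.
  move=> u; case: (Hcov u) => i Hi; exists i; exact: (subsetP (Hsub i)).
split.
  move=> u w Huw; case: (Hedge u w Huw) => i /andP [Hu Hw'].
  by exists i; rewrite (subsetP (Hsub i)) // (subsetP (Hsub i)).
move=> v i j /bigcupP [x Hx]; rewrite inE => /dist_leP [p [Hs [Hp Hl]]].
move=> /bigcupP [y Hy]; rewrite inE => /dist_leP [q [Hs' [Hp' Hl']]].
case: (Hcov v) => c Hc.
have Hsym : symmetric (@Q V e I F X r v).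
  case: Htree => [[HFs _] _] a b /=.
  by rewrite HFs; case: (F b a); case: (v \in _); case: (v \in _).
apply: (connect_trans (y:=c)); first exact: (@walk_conn V e I F X r v Hedge Hconn p x i c Hs Hp Hl Hx Hc).
rewrite (sym_connect_sym Hsym). exact: (@walk_conn V e I F X r v Hedge Hconn q y j c Hs' Hp' Hl' Hy Hc).
Qed.
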